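(* Assume the general coarsening setting described in the context. Then CAR(GCMP) holds if and only if CAR(REL) holds, where: CAR(GCMP) means that for all $(\theta,\psi)$ the random variable $\mathcal{L}^{\psi/\psi_0}_{\mathcal{R}|\mathcal{X}}$ is $\mathcal{O}$-measurable; and CAR(REL) means that for all $\psi$ there is a version $(r,x)\mapsto\mathcal{L}^{\psi/\psi_0}_{\mathcal{R}|\mathcal{X}}(r,x)$ (a measurable function of the paths of $(R,X)$) such that for every path $r$ of $R$ and all paths $x,x'$ of $X$ with $rx=rx'$ (i.e. $r_tx_t=r_tx'_t$ for all $t$) one has $\mathcal{L}^{\psi/\psi_0}_{\mathcal{R}|\mathcal{X}}(r,x)=\mathcal{L}^{\psi/\psi_0}_{\mathcal{R}|\mathcal{X}}(r,x')$.
   Context: Setting. On a measurable space $(\Omega,\mathcal{F})$ live two càdlàg stochastic processes: $X=(X_t)_{t\ge0}$ with values in $\mathbb{R}^d$ (path space a Skorohod space with its Borel $\sigma$-field) and a response indicator process $R=(R_t)_{t\ge0}$ with values in $\{0,1\}$ (componentwise), $R_t=1$ meaning $X_t$ is observed. Let $\mathcal{X}=\sigma(X_t,t\ge0)$, $\mathcal{R}=\sigma(R_t,t\ge0)$, $\mathcal{F}=\mathcal{X}\vee\mathcal{R}$. A model is a family $\{P_{(\theta,\psi)}:(\theta,\psi)\in\Theta\times\Psi\}$ of mutually equivalent probability measures on $\mathcal{F}$ with reference measure $P_{(\theta_0,\psi_0)}$; the restriction of $P_{(\theta,\psi)}$ to $\mathcal{X}$ depends only on $\theta$. Non-informativeness: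 $P_{(\theta_1,\psi)}(A\mid\mathcal{X})=P_{(\theta_2,\psi)}(A\mid\mathcal{X})$ a.s. for all $A\in\mathcal{R}$, all $\theta_1,\theta_2,\psi$. For a sub-$\sigma$-field $\mathcal{G}$, $\mathcal{L}^{(\theta,\psi)/(\theta_0,\psi_0)}_{\mathcal{G}}$ is the Radon–Nikodym derivative $dP_{(\theta,\psi)}/dP_{(\theta_0,\psi_0)}$ restricted to $\mathcal{G}$. The conditional likelihood ratio of $\mathcal{Y}$ given $\mathcal{G}$ is the $\mathcal{G}\vee\mathcal{Y}$-measurable variable $\mathcal{L}_{\mathcal{Y}|\mathcal{G}}=\mathcal{L}_{\mathcal{G}\vee\mathcal{Y}}/\mathcal{L}_{\mathcal{G}}$ (it satisfies $E_{(\theta,\psi)}[1_A\mid\mathcal{G}]=E_{(\theta_0,\psi_0)}[1_A\mathcal{L}_{\mathcal{Y}|\mathcal{G}}\mid\mathcal{G}]$ for $A\in\mathcal{Y}$). By non-informativeness $\mathcal{L}^{(\theta,\psi)/(\theta_0,\psi_0)}_{\mathcal{R}|\mathcal{X}}$ does not depend on $\theta$ and is denoted $\mathcal{L}^{\psi/\psi_0}_{\mathcal{R}|\mathcal{X}}$. The observed $\sigma$-field is $\mathcal{O}=\sigma(R_tX_t,R_t,\ t\ge0)$. *)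

(* Defs.v *)
From HB Require Import structures.
From mathcomp Require Import all_boot all_order all_algebra.
From mathcomp Require Import all_classical all_reals all_analysis.
Set Implicit Arguments. Unset Strict Implicit. Unset Printing Implicit Defensive.
Import Order.TTheory GRing.Theory Num.Theory.
Import numFieldNormedType.Exports.
Local Open Scope classical_set_scope.
Local Open Scope ring_scope.

(* A path of an R^n-valued process: t |-> (i |-> x_t^i).  Only times t >= 0
   are relevant (all notions below only look at t >= 0). *)
Definition ppath (R : realType) (n : nat) := R -> 'I_n -> R.

(* càdlàg on [0, oo): right-continuous at every t >= 0, left limits at every t > 0
   (componentwise, which is the same as in R^n). *)
Definition cadlag (R : realType) (n : nat) (x : ppath R n) : Prop :=
  forall (i : 'I_n) (t : R), 0 <= t ->
    ((fun s => x s i) @ at_right t --> x t i) /\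
    (0 < t -> cvg ((fun s => x s i) @ at_left t)).

Definition is_Rpath (R : realType) (n : nat) (r : ppath R n) : Prop :=
  cadlag r /\ forall (i : 'I_n) (t : R), 0 <= t -> r t i = 0 \/ r t i = 1.

Definition gen_of (U : Type) (R : realType) (F : (U -> R) -> Prop) : set (set U) :=
  <<s [set A | exists f B, F f /\ measurable B /\ A = f @^-1` B] >>.

Definition Gmeas (U : Type) (R : realType) (G : set (set U)) (f : U -> R) : Prop :=
  forall B : set R, measurable B -> G (f @^-1` B).

Definition trace_meas (U : Type) (R : realType) (D : set U) (G : set (set U))
  (h : U -> R) : Prop :=
  forall B : set R, measurable B -> exists A, G A /\ D `&` h @^-1` B = D `&` A.

Section Setting.
Context (R : realType) (n : nat) (d : measure_display) (T : measurableType d).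

Definition sigma_path (Y : T -> ppath R n) : set (set T) :=
  gen_of (fun f : T -> R => exists (t : R) (i : 'I_n), 0 <= t /\ f = fun w => Y w t i).

Definition sigma_XR (X Rr : T -> ppath R n) : set (set T) :=
  gen_of (fun f : T -> R => exists (t : R) (i : 'I_n), 0 <= t /\
            (f = (fun w => X w t i) \/ f = (fun w => Rr w t i))).

Definition sigma_obs (X Rr : T -> ppath R n) : set (set T) :=
  gen_of (fun f : T -> R => exists (t : R) (i : 'I_n), 0 <= t /\
            (f = (fun w => Rr w t i * X w t i) \/ f = (fun w => Rr w t i))).

Definition RN_version (G : set (set T)) (P Q : probability T R) (f : T -> R) : Prop :=
  Gmeas G f /\ (forall w, 0 <= f w) /\
  forall A, G A -> (P A = \int[Q]_(w in A) (f w)%:E)%E.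

Definition condprob_version (G : set (set T)) (P : probability T R) (A : set T)
  (g : T -> R) : Prop :=
  Gmeas G g /\ forall B, G B -> (P (A `&` B) = \int[P]_(w in B) (g w)%:E)%E.

Definition coarsening_setting (Theta Psi : Type) (th0 : Theta) (ps0 : Psi)
  (P : Theta -> Psi -> probability T R) (X Rr : T -> ppath R n) : Prop :=
  [/\
      (forall w, cadlag (X w) /\ is_Rpath (Rr w)),
      (@measurable d T = sigma_XR X Rr),
      (forall th ps A, measurable A -> (P th ps A = 0%E <-> P th0 ps0 A = 0%E)),
      (forall th ps ps' A, sigma_path X A -> P th ps A = P th ps' A) &
      (forall th1 th2 ps A g1 g2, sigma_path Rr A ->
         condprob_version (sigma_path X) (P th1 ps) A g1 ->
         condprob_version (sigma_path X) (P th2 ps) A g2 ->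
         {ae P th0 ps0, forall w, g1 w = g2 w})].

(* g is a version of the conditional likelihood ratio
   L_{R|X} = L_{X v R} / L_X of P_(th,ps) w.r.t. P_(th0,ps0) *)
Definition condLR_version (Theta Psi : Type) (th0 : Theta) (ps0 : Psi)
  (P : Theta -> Psi -> probability T R) (X : T -> ppath R n)
  (th : Theta) (ps : Psi) (g : T -> R) : Prop :=
  measurable_fun setT g /\
  exists fF fX, RN_version measurable (P th ps) (P th0 ps0) fF /\
    RN_version (sigma_path X) (P th ps) (P th0 ps0) fX /\
    {ae P th0 ps0, forall w, g w = fF w / fX w}.

Definition CAR_GCMP (Theta Psi : Type) (th0 : Theta) (ps0 : Psi)
  (P : Theta -> Psi -> probability T R) (X Rr : T -> ppath R n) : Prop :=
  forall th ps, exists g, condLR_version th0 ps0 P X th ps g /\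
    Gmeas (sigma_obs X Rr) g.

Definition sigma_pairs : set (set (ppath R n * ppath R n)) :=
  gen_of (fun f : ppath R n * ppath R n -> R => exists (t : R) (i : 'I_n), 0 <= t /\
            (f = (fun p => p.1 t i) \/ f = (fun p => p.2 t i))).

Definition CAR_REL (Theta Psi : Type) (th0 : Theta) (ps0 : Psi)
  (P : Theta -> Psi -> probability T R) (X Rr : T -> ppath R n) : Prop :=
  forall ps, exists h : ppath R n -> ppath R n -> R,
    trace_meas [set p | is_Rpath p.1 /\ cadlag p.2] sigma_pairs
               (fun p => h p.1 p.2) /\
    (forall th, condLR_version th0 ps0 P X th ps (fun w => h (Rr w) (X w))) /\
    (forall r x x', is_Rpath r -> cadlag x -> cadlag x' ->
       (forall t i, 0 <= t -> r t i * x t i = r t i * x' t i) -> h r x = h r x').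

End Setting.

(* Main.v *)
Require Import Defs.
From HB Require Import structures.
From mathcomp Require Import all_boot all_order all_algebra.
From mathcomp Require Import all_classical all_reals all_analysis.
From mathcomp Require Import measurable_realfun.
Set Implicit Arguments. Unset Strict Implicit. Unset Printing Implicit Defensive.
Import Order.TTheory GRing.Theory Num.Theory.
Import numFieldNormedType.Exports.
Local Open Scope classical_set_scope.
Local Open Scope ring_scope.
Section GenLemmas.
Context (R : realType).

Definition gens (U : Type) (F : (U -> R) -> Prop) : set (set U) :=
  [set A | exists f B, F f /\ measurable B /\ A = f @^-1` B].

Lemma gen_ofE U (F : (U -> R) -> Prop) : gen_of F = <<s gens F >>.
Proof. by []. Qed.

Lemma gen_of_sub U (F : (U -> R) -> Prop) (G : set (set U)) :
  sigma_algebra setT G -> (forall f B, F f -> measurable B -> G (f @^-1` B)) ->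
  gen_of F `<=` G.
Proof. by move=> sG h; apply: smallest_sub => // A [f [B [Ff [mB ->]]]]; exact: h. Qed.

Lemma Gmeas_gen U (F : (U -> R) -> Prop) f : F f -> Gmeas (gen_of F) f.
Proof. by move=> Ff B mB; apply: sub_sigma_algebra; exists f, B. Qed.

Lemma preimage_sigma (T U : Type) (phi : T -> U) (G : set (set T)) :
  sigma_algebra setT G -> sigma_algebra setT [set A | G (phi @^-1` A)].
Proof.
case=> G0 GC GU; split => /=.
- by rewrite preimage_set0.
- by move=> A GA; exact: (GC _ GA).
- by move=> F hF; exact: (GU _ hF).
Qed.

Lemma image_sigma (T U : Type) (phi : T -> U) (G : set (set U)) :
  sigma_algebra setT G -> sigma_algebra setT [set phi @^-1` A | A in G].
Proof.
case=> G0 GC GU; split => /=.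
- by exists set0 => //; rewrite preimage_set0.
- move=> _ [A GA <-]; exists (setT `\` A); first exact: GC.
  by [].
- move=> F hF.
  have : forall k, exists A, G A /\ phi @^-1` A = F k.
    by move=> k; case: (hF k) => A ? ?; exists A.
  case/choice => f hf; exists (\bigcup_k f k); first by apply: GU => k; case: (hf k).
  by rewrite preimage_bigcup; apply: eq_bigcupr => k _; case: (hf k).
Qed.

Lemma pullback (T U : Type) (phi : T -> U) (FT : (T -> R) -> Prop)
    (FU : (U -> R) -> Prop) :
  (forall u, FU u -> Gmeas (gen_of FT) (u \o phi)) ->
  forall A, gen_of FU A -> gen_of FT (phi @^-1` A).
Proof.
move=> h; apply: (@gen_of_sub _ _ [set A | gen_of FT (phi @^-1` A)]).
  exact/preimage_sigma/smallest_sigma_algebra.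
by move=> u B Fu mB /=; exact: (h u Fu B mB).
Qed.

Lemma factor (T U : Type) (phi : T -> U) (FT : (T -> R) -> Prop)
    (FU : (U -> R) -> Prop) :
  (forall f, FT f -> exists u, FU u /\ f = u \o phi) ->
  forall A, gen_of FT A -> exists2 A', gen_of FU A' & phi @^-1` A' = A.
Proof.
move=> h; apply: (@gen_of_sub _ _ [set phi @^-1` A | A in gen_of FU]).
  exact/image_sigma/smallest_sigma_algebra.
move=> f B Ff mB; have [u [Fu ->]] := h f Ff; exists (u @^-1` B) => //.
exact: Gmeas_gen.
Qed.

Lemma doob_dynkin (T : Type) (U : pointedType) (phi : T -> U)
    (FT : (T -> R) -> Prop) (FU : (U -> R) -> Prop) (g : T -> R) :
  (forall f, FT f -> exists u, FU u /\ f = u \o phi) ->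
  Gmeas (gen_of FT) g ->
  exists k : U -> R, Gmeas (gen_of FU) k /\ forall w, g w = k (phi w).
Proof.
move=> hF mg.
have hA : forall q : rat, exists A', gen_of FU A' /\
    phi @^-1` A' = g @^-1` `]-oo, (ratr q)[.
  move=> q; have mI : measurable (`]-oo, (ratr q)[ : set R) by exact: measurable_itv.
  have [A' ? ?] := factor hF (mg _ mI).
  by exists A'.
case: (choice hA) => A hA'.
pose k' (u : g_sigma_algebraType (gens FU)) : \bar R := ereal_inf [set (ratr q)%:E | q in [set q | A q u]].
exists (fun u => fine (k' u)); split.
- have mk' : measurable_fun (setT : set (g_sigma_algebraType (gens FU))) k'.
    apply: (@measurability _ _ (g_sigma_algebraType (gens FU)) (\bar R) setT k' (@ErealGenInftyO.G R)).
      exact: ErealGenInftyO.measurableE.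
    move=> _ [_ [r ->] <-].
    have -> : setT `&` k' @^-1` `]-oo, r%:E[ =
        \bigcup_q (if (ratr q < r) then A q else set0).
      apply/seteqP; split => u /=.
      + rewrite in_itv /= => -[_ /ereal_inf_lt [_ [q Aqu <-]]].
        rewrite lte_fin => qr; exists q => //; by rewrite qr.
      + case=> q _; case: ifPn => // qr Aqu; split => //.
        rewrite in_itv /=; apply: (le_lt_trans (ereal_inf_lbound _)).
          by exists q.
        by rewrite lte_fin.
    apply: bigcupT_measurable_rat => q; case: ifPn => _ //; exact: (hA' q).1.
  move=> B mB.
  have := measurableT_comp (fine_measurable measurableT) mk' measurableT mB.
  by rewrite setTI.
- move=> w; suff -> : k' (phi w) = (g w)%:E by [].
  have Aq q : A q (phi w) <-> g w < ratr q.
    have := (hA' q).2 => /(congr1 (fun S => S w)) /= ->.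
    by rewrite /= in_itv /=.
  apply/eqP; rewrite eq_le; apply/andP; split.
  + apply/lee_addgt0Pr => e e0.
    have [q] : exists q : rat, ratr q \in `](g w), (g w + e)[.
      by apply: rat_in_itvoo; rewrite ltrDl.
    rewrite in_itv /= => /andP[q1 q2].
    apply: (le_trans (ereal_inf_lbound _)); first by exists q => //; exact/Aq.
    by rewrite -EFinD lee_fin ltW.
  + apply: le_ereal_inf_tmp => _ [q /Aq qw <-].
    by rewrite lee_fin ltW.
Qed.

End GenLemmas.
Local Open Scope ereal_scope.

Section pf_def.
Context d d' (T : measurableType d) (T' : measurableType d') (R : realType).
Variables (m : {finite_measure set T -> \bar R}) (f : {mfun T >-> T'}).

Definition pf := pushforward m f.

Let pf0 : pf set0 = 0.
Proof. by rewrite /pf /pushforward preimage_set0 measure0. Qed.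

Let pf_ge0 A : 0 <= pf A.
Proof. exact: measure_ge0. Qed.

Let mf := @measurable_funPT _ _ _ _ f.

Let pf_sigma_additive : semi_sigma_additive pf.
Proof.
move=> F mF tF mUF; rewrite /pf /pushforward preimage_bigcup.
apply: measure_semi_sigma_additive.
- by move=> k; rewrite -[X in measurable X]setTI; exact: mf.
- apply/trivIsetP => /= i j _ _ ij; rewrite -preimage_setI.
  by move/trivIsetP : tF => /(_ _ _ _ _ ij) ->//; rewrite preimage_set0.
- by rewrite -preimage_bigcup -[X in measurable X]setTI; exact: mf.
Qed.

HB.instance Definition _ := isMeasure.Build _ _ _ pf
  pf0 pf_ge0 pf_sigma_additive.

Let pf_fin : fin_num_fun pf.
Proof.
move=> U mU; rewrite /pf /pushforward fin_num_measure//.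
by rewrite -[X in measurable X]setTI; exact: mf.
Qed.

HB.instance Definition _ := Measure_isFinite.Build _ _ _ pf pf_fin.

Lemma ge0_integral_pf (D : set T') (h : T' -> \bar R) : measurable D ->
  measurable_fun setT h -> (forall y, 0 <= h y) ->
  \int[pf]_(y in D) h y = \int[m]_(x in f @^-1` D) h (f x).
Proof.
move=> mD mh h0; rewrite /pf ge0_integral_pushforward//.
exact: measurable_funTS.
Qed.

End pf_def.

Section dmeas_def.
Context d (T : measurableType d) (R : realType).
Variables (mu : {measure set T -> \bar R}) (h : T -> \bar R).
Variables (mh : measurable_fun setT h) (h0 : forall x, 0 <= h x).

Definition dmeas & measurable_fun setT h & (forall x, 0 <= h x) :=
  fun A => \int[mu]_(x in A) h x.

Local Notation dm := (@dmeas mh h0).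

Let dm0 : dm set0 = 0.
Proof. by rewrite /dmeas integral_set0. Qed.

Let dm_ge0 A : 0 <= dm A.
Proof. by apply: integral_ge0 => x _; exact: h0. Qed.

Let dm_sa : semi_sigma_additive dm.
Proof. exact: semi_sigma_additive_nng_induced. Qed.

HB.instance Definition _ := isMeasure.Build _ _ _ dm dm0 dm_ge0 dm_sa.

End dmeas_def.

Lemma dens_change d (S : measurableType d) (R : realType)
    (nu : {finite_measure set S -> \bar R})
    (mu : {sigma_finite_measure set S -> \bar R}) (f : S -> \bar R) :
  measurable_fun setT f -> (forall x, 0 <= f x) ->
  (forall E, measurable E -> nu E = \int[mu]_(x in E) f x) ->
  forall (phi : S -> \bar R) E, measurable E -> measurable_fun setT phi ->
  (forall x, 0 <= phi x) ->
  \int[nu]_(x in E) phi x = \int[mu]_(x in E) (phi x * f x).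
Proof.
move=> mf f0 nuf phi E mE mphi phi0.
have numu : nu `<< mu.
  apply/null_content_dominatesP => A mA muA.
  by rewrite nuf// null_set_integral//; exact: measurable_funTS.
rewrite -(Radon_Nikodym_SigmaFinite.change_of_variables numu phi0 mE
  (measurable_funTS mphi)).
have mRN : measurable_fun setT (Radon_Nikodym_SigmaFinite.f nu mu).
  exact: measurable_int (Radon_Nikodym_SigmaFinite.f_integrable numu).
apply: ge0_ae_eq_integral => //.
- by apply: emeasurable_funM; exact: measurable_funTS.
- by apply: emeasurable_funM; exact: measurable_funTS.
- by move=> x _; apply: mule_ge0 => //; exact: Radon_Nikodym_SigmaFinite.f_ge0.
- by move=> x _; exact: mule_ge0.
apply: ae_eqe_mul2l; apply: (integral_ae_eq mE).
- apply: (integrableS measurableT) => //.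
  exact: Radon_Nikodym_SigmaFinite.f_integrable.
- exact: measurable_funTS.
- move=> F FE mF; rewrite -Radon_Nikodym_SigmaFinite.f_integral//.
  exact: nuf.
Qed.
Section condprob.
Context (R : realType) (n : nat) (d : measure_display) (T : measurableType d).
Variable X : T -> ppath R n.

Definition FX : (T -> R) -> Prop :=
  fun f => exists (t : R) (i : 'I_n), (0 <= t)%R /\ f = fun w => X w t i.

Local Notation TG := (g_sigma_algebraType (gens FX)).

Variable hX : sigma_path X `<=` @measurable _ T.

Definition toG : T -> TG := fun x => x.

Lemma toG_mf : measurable_fun setT toG.
Proof. by move=> _ B mB; rewrite setTI; exact: hX. Qed.

HB.instance Definition _ := isMeasurableFun.Build _ _ T TG toG toG_mf.

Lemma Gmeas_mf (h : T -> R) : Gmeas (sigma_path X) h ->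
  measurable_fun (setT : set TG) (fun x : TG => h x).
Proof. by move=> mh _ B mB; rewrite setTI; exact: mh. Qed.

Lemma Gmeas_mfE (h : T -> R) : Gmeas (sigma_path X) h ->
  measurable_fun (setT : set TG) (fun x : TG => (h x)%:E).
Proof. by move=> mh; apply/measurable_EFinP; exact: Gmeas_mf. Qed.

Lemma Gmeas_meas (h : T -> R) : Gmeas (sigma_path X) h -> measurable_fun setT h.
Proof. by move=> mh _ B mB; rewrite setTI; apply: hX; exact: mh. Qed.

Lemma mf_Gmeas (h : T -> R) :
  measurable_fun (setT : set TG) (fun x : TG => h x) -> Gmeas (sigma_path X) h.
Proof. by move=> mh B mB; have := mh measurableT B mB; rewrite setTI. Qed.

Section cp_def.
Variables (P : probability T R) (A : set T) (mA : measurable A).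

Lemma PAoo : P A < +oo.
Proof. exact: (le_lt_trans (probability_le1 P mA) (ltry _)). Qed.

Definition nuA := pf (mfrestr mA PAoo) toG.
Definition muG := pf P toG.

Lemma nuA_dom : nuA `<< muG.
Proof.
apply/null_content_dominatesP => E mE muE.
rewrite /nuA /pf /pushforward /= /mfrestr /mrestr.
have muE' : P (toG @^-1` E) = 0 := muE.
apply: (subset_measure0 _ _ _ muE').
- by apply: measurableI => //; exact: hX.
- exact: hX.
- exact: subIsetl.
Qed.

Definition RNA := Radon_Nikodym_SigmaFinite.f nuA muG.

Definition cp : T -> R := fun x => fine (RNA x).

Lemma RNA_mf : measurable_fun setT RNA.
Proof. exact: measurable_int (Radon_Nikodym_SigmaFinite.f_integrable nuA_dom). Qed.

Lemma RNA_ge0 x : 0 <= RNA x.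
Proof. exact: Radon_Nikodym_SigmaFinite.f_ge0 nuA_dom x. Qed.

Lemma RNAE x : (cp x)%:E = RNA x.
Proof. by rewrite /cp fineK//; exact: Radon_Nikodym_SigmaFinite.f_fin_num nuA_dom x. Qed.

Lemma cp_ge0 x : (0 <= cp x)%R.
Proof. by rewrite -lee_fin RNAE RNA_ge0. Qed.

Lemma cp_meas : Gmeas (sigma_path X) cp.
Proof.
apply: mf_Gmeas.
exact: (measurableT_comp (fine_measurable measurableT) RNA_mf).
Qed.

Lemma cp_version : condprob_version (sigma_path X) P A cp.
Proof.
split; first exact: cp_meas.
move=> B GB; rewrite setIC.
transitivity (\int[muG]_(x in B) RNA x).
  exact: (Radon_Nikodym_SigmaFinite.f_integral nuA_dom (GB : measurable (B : set TG))).
rewrite /muG ge0_integral_pf//; last 2 first.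
- exact: RNA_mf.
- exact: RNA_ge0.
by apply: eq_integral => x _; rewrite RNAE.
Qed.

Lemma cp_int (rho : T -> R) : (forall x, (0 <= rho x)%R) ->
  Gmeas (sigma_path X) rho -> forall B, sigma_path X B ->
  \int[P]_(x in A `&` B) (rho x)%:E = \int[P]_(x in B) (rho x * cp x)%:E.
Proof.
move=> rho0 mrho B GB.
have mB : measurable B by exact: hX.
have mrhoT := Gmeas_meas mrho.
transitivity (\int[mfrestr mA PAoo]_(x in B) (rho x)%:E).
  have m1 : measurable_fun setT (fun x => (\1_A x : R)%:E).
    by apply/measurable_EFinP; exact: measurable_indic.
  have i0 x : 0 <= (\1_A x : R)%:E by rewrite lee_fin indicE ler0n.
  have hE E : measurable E -> mfrestr mA PAoo E = \int[P]_(x in E) (\1_A x : R)%:E.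
    by move=> mE; rewrite integral_indic// /mfrestr /mrestr setIC.
  have mrhoE : measurable_fun setT (fun x => (rho x)%:E) by exact/measurable_EFinP.
  have rho0E x : 0 <= (rho x)%:E by rewrite lee_fin.
  rewrite (@dens_change _ _ _ (mfrestr mA PAoo) P _ m1 i0 hE _ _ mB mrhoE rho0E).
  rewrite setIC integral_mkcondr; apply: eq_integral => x _.
  by rewrite patchE indicE; case: ifP => _; rewrite ?mulr1 ?mulr0 ?mule1 ?mule0.
transitivity (\int[nuA]_(x in B) (rho x)%:E).
  rewrite /nuA ge0_integral_pf//.
  exact: Gmeas_mfE.
transitivity (\int[muG]_(x in B) ((rho x)%:E * RNA x)).
  symmetry; apply: (Radon_Nikodym_SigmaFinite.change_of_variables nuA_dom
    (f := fun x => (rho x)%:E) _ (GB : measurable (B : set TG))).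
  - by move=> x; rewrite lee_fin.
  - exact: measurable_funTS (Gmeas_mfE mrho).
rewrite /muG ge0_integral_pf//.
- by apply: eq_integral => x _; rewrite EFinM RNAE.
- apply: emeasurable_funM; first exact: Gmeas_mfE.
  exact: RNA_mf.
- by move=> x; apply: mule_ge0; [rewrite lee_fin|exact: RNA_ge0].
Qed.

End cp_def.

Lemma densX (P Q : probability T R) (fX : T -> R) :
  RN_version (sigma_path X) P Q fX ->
  forall psi : T -> R, (forall x, (0 <= psi x)%R) -> Gmeas (sigma_path X) psi ->
  forall B, sigma_path X B ->
  \int[P]_(x in B) (psi x)%:E = \int[Q]_(x in B) (psi x * fX x)%:E.
Proof.
move=> [mfX [fX0 hfX]] psi psi0 mpsi B GB.
have mpsiE := Gmeas_mfE mpsi.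
have mfXE := Gmeas_mfE mfX.
have psi0E x : 0 <= (psi x)%:E by rewrite lee_fin.
have fX0E x : 0 <= (fX x)%:E by rewrite lee_fin.
have GB' : measurable (B : set TG) := GB.
have hE E : measurable (E : set TG) ->
    muG P E = \int[muG Q]_(x in E) (fX x)%:E.
  move=> mE; rewrite /muG ge0_integral_pf//; exact: hfX.
transitivity (\int[muG P]_(x in B) (psi x)%:E).
  by rewrite /muG ge0_integral_pf.
rewrite (@dens_change _ _ _ (muG P) (muG Q) _ mfXE fX0E hE _ _ GB' mpsiE psi0E).
have mpf : measurable_fun (setT : set TG) (fun x => (psi x)%:E * (fX x)%:E).
  exact: emeasurable_funM.
rewrite /muG ge0_integral_pf//.
- by move=> x; apply: mule_ge0.
Qed.

End condprob.

Lemma densF (R : realType) (d : measure_display) (T : measurableType d)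
  (P Q : probability T R) (fF : T -> R) :
  RN_version measurable P Q fF ->
  forall phi : T -> R, (forall x, (0 <= phi x)%R) -> measurable_fun setT phi ->
  forall C, measurable C ->
  \int[P]_(x in C) (phi x)%:E = \int[Q]_(x in C) (phi x * fF x)%:E.
Proof.
move=> [mfF [fF0 hfF]] phi phi0 mphi C mC.
have mfFE : measurable_fun setT (fun x => (fF x)%:E).
  apply/measurable_EFinP => _ B mB; rewrite setTI; exact: mfF.
have fF0E x : 0 <= (fF x)%:E by rewrite lee_fin.
have mphiE : measurable_fun setT (fun x => (phi x)%:E) by exact/measurable_EFinP.
have phi0E x : 0 <= (phi x)%:E by rewrite lee_fin.
exact: (@dens_change _ _ _ P Q _ mfFE fF0E hfF _ _ mC mphiE phi0E).
Qed.
Lemma measurable_inv (R : realType) : measurable_fun (setT : set R) (@GRing.inv R).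
Proof.
move=> _ B mB; rewrite setTI.
have -> : (@GRing.inv R) @^-1` B =
    ([set x | x != 0%R] `&` (@GRing.inv R) @^-1` B) `|`
    ([set 0%R] `&` (@GRing.inv R) @^-1` B).
  apply/seteqP; split => x /=.
  - by case: (eqVneq x 0%R) => [->|x0] Bx; [right|left].
  - by case=> -[].
apply: measurableU.
- apply: open_continuous_measurable_fun => //.
  + by move=> x /set_mem /= x0; exact: inv_continuous.
  + have -> : [set x : R | x != 0%R] = ~` [set 0%R].
      by apply/seteqP; split => x /=; move/eqP.
    by apply: measurableC; exact: measurable_set1.
- have [B0|B0] := pselect (B ((0 : R)^-1)%R).
  + have -> : [set 0%R] `&` (@GRing.inv R) @^-1` B = [set 0%R].
      by apply/seteqP; split => [x [->]//|x /= ->].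
    exact: measurable_set1.
  + have -> : [set 0%R] `&` (@GRing.inv R) @^-1` B = set0.
      by apply/seteqP; split => [x [/= -> ]//|x].
    exact: measurable0.
Qed.

Lemma measurable_funV d (T : measurableType d) (R : realType) (f : T -> R) :
  measurable_fun setT f -> measurable_fun setT (fun x => (f x)^-1%R).
Proof. by move=> mf; exact: (measurableT_comp (@measurable_inv R) mf). Qed.

Lemma aeP d (T : measurableType d) (R : realType) (mu : {measure set T -> \bar R})
    (Pr : T -> Prop) :
  {ae mu, forall x, Pr x} <-> exists N, [/\ measurable N, mu N = 0 & forall x, ~ N x -> Pr x].
Proof.
split.
- case=> N [mN N0 sN]; exists N; split => // x Nx.
  by apply: contrapT => Px; apply: Nx; exact: sN.
- case=> N [mN N0 h]; exists N; split => // x /= nPx.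
  by apply: contrapT => nN; apply: nPx; exact: h.
Qed.

Lemma aeS d (T : measurableType d) (R : realType) (mu : {measure set T -> \bar R})
    (P1 P2 : T -> Prop) :
  (forall x, P1 x -> P2 x) -> {ae mu, forall x, P1 x} -> {ae mu, forall x, P2 x}.
Proof.
move=> h /aeP[N [mN N0 hN]]; apply/aeP; exists N; split => // x /hN; exact: h.
Qed.

Lemma aeI d (T : measurableType d) (R : realType) (mu : {measure set T -> \bar R})
    (P1 P2 : T -> Prop) :
  {ae mu, forall x, P1 x} -> {ae mu, forall x, P2 x} -> {ae mu, forall x, P1 x /\ P2 x}.
Proof.
move=> /aeP[N1 [mN1 N10 h1]] /aeP[N2 [mN2 N20 h2]]; apply/aeP.
exists (N1 `|` N2); split.
- exact: measurableU.
- by rewrite measureU0.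
- by move=> x nN; split; [apply: h1|apply: h2] => N; apply: nN; [left|right].
Qed.
Section core.
Context (R : realType) (n : nat) (d : measure_display) (T : measurableType d)
  (Theta Psi : Type) (th0 : Theta) (ps0 : Psi)
  (P : Theta -> Psi -> probability T R) (X Rr : T -> ppath R n).
Hypothesis hset : coarsening_setting th0 ps0 P X Rr.

Local Notation Q := (P th0 ps0).

Lemma hX_of : sigma_path X `<=` @measurable _ T.
Proof.
case: hset => _ hF _ _ _; rewrite hF; apply: gen_of_sub.
  exact: smallest_sigma_algebra.
move=> f B [t [i [t0 ->]]] mB; apply: sub_sigma_algebra.
exists (fun w => X w t i), B; split => //; exists t, i; split => //; by left.
Qed.

Lemma hRr_of : sigma_path Rr `<=` @measurable _ T.
Proof.
case: hset => _ hF _ _ _; rewrite hF; apply: gen_of_sub.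
  exact: smallest_sigma_algebra.
move=> f B [t [i [t0 ->]]] mB; apply: sub_sigma_algebra.
exists (fun w => Rr w t i), B; split => //; exists t, i; split => //; by right.
Qed.

Definition Gpi : set (set T) :=
  [set C | exists A B, sigma_path Rr A /\ sigma_path X B /\ C = A `&` B].

Lemma sigma_pathT (Y : T -> ppath R n) : sigma_path Y setT.
Proof. exact: (@measurableT _ (g_sigma_algebraType (gens (FX Y)))). Qed.

Lemma sigma_pathI (Y : T -> ppath R n) A B :
  sigma_path Y A -> sigma_path Y B -> sigma_path Y (A `&` B).
Proof. exact: (@measurableI _ (g_sigma_algebraType (gens (FX Y)))). Qed.

Lemma mGpi : @measurable _ T = <<s Gpi >>.
Proof.
have hX := hX_of; have hR := hRr_of.
case: hset => _ hF _ _ _; apply/seteqP; split.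
- rewrite hF; apply: gen_of_sub.
    exact: (smallest_sigma_algebra setT Gpi).
  move=> f B [t [i [t0 [->|->]]]] mB; apply: sub_sigma_algebra.
  + exists setT, ((fun w => X w t i) @^-1` B); split; first exact: sigma_pathT.
    split; last by rewrite setTI.
    by apply: sub_sigma_algebra; exists (fun w => X w t i), B; split => //; exists t, i.
  + exists ((fun w => Rr w t i) @^-1` B), setT; split.
      by apply: sub_sigma_algebra; exists (fun w => Rr w t i), B; split => //; exists t, i.
    by split; [exact: sigma_pathT|rewrite setIT].
- apply: smallest_sub; first exact: sigma_algebra_measurable.
  move=> _ [A [B [GA [GB ->]]]]; apply: measurableI; [exact: hR|exact: hX].
Qed.

Lemma setIGpi : setI_closed Gpi.
Proof.
move=> _ _ [A [B [GA [GB ->]]]] [A' [B' [GA' [GB' ->]]]].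
exists (A `&` A'), (B `&` B'); split; first exact: sigma_pathI.
by split; [exact: sigma_pathI|rewrite setIACA].
Qed.

Lemma fX_pos (Pa : probability T R) fX : RN_version (sigma_path X) Pa Q fX ->
  (forall N, measurable N -> Pa N = 0 -> Q N = 0) -> {ae Q, forall w, fX w != 0%R}.
Proof.
move=> [mfX [fX0 hfX]] equiv.
have GN : sigma_path X (fX @^-1` [set 0%R]) := mfX _ (measurable_set1 0%R).
have mN := hX_of GN.
apply/aeP; exists (fX @^-1` [set 0%R]); split => //.
- apply: equiv => //; rewrite hfX //; apply: integral0_eq => x /= ->; by [].
- by move=> x Nx; apply/eqP.
Qed.

Lemma core th th1 ps fF1 fX1 fF2 fX2 :
  RN_version measurable (P th ps) Q fF1 -> RN_version (sigma_path X) (P th ps) Q fX1 ->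
  RN_version measurable (P th1 ps) Q fF2 -> RN_version (sigma_path X) (P th1 ps) Q fX2 ->
  {ae Q, forall w, (fF1 w / fX1 w = fF2 w / fX2 w)%R}.
Proof.
move=> hF1 hX1 hF2 hX2.
have hX := hX_of; have hR := hRr_of.
have hset' := hset; case: hset' => _ hF hequiv _ hnoninf.
have [mfF1 [fF10 _]] := hF1; have [mfX1 [fX10 _]] := hX1.
have [mfF2 [fF20 iF2]] := hF2; have [mfX2 [fX20 _]] := hX2.
have mfF1T : measurable_fun setT fF1 by move=> _ B mB; rewrite setTI; exact: mfF1.
have mfF2T : measurable_fun setT fF2 by move=> _ B mB; rewrite setTI; exact: mfF2.
have mfX1T := Gmeas_meas hX mfX1.
have mfX2T := Gmeas_meas hX mfX2.
pose rho w := (fX2 w / fX1 w)%R.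
have rho0 w : (0 <= rho w)%R by apply: divr_ge0.
have mrho : Gmeas (sigma_path X) rho.
  apply: mf_Gmeas; apply: measurable_funM; first exact: Gmeas_mf.
  exact: (measurable_funV (Gmeas_mf mfX1)).
pose L w := (fF1 w / fX1 w * fX2 w)%R.
have mL : measurable_fun setT (fun w => (L w)%:E).
  apply/measurable_EFinP; apply: measurable_funM => //.
  by apply: measurable_funM => //; exact: measurable_funV.
have L0 w : 0 <= (L w)%:E.
  by rewrite lee_fin; apply: mulr_ge0 => //; exact: divr_ge0.
have equiv1 N : measurable N -> P th ps N = 0 -> Q N = 0.
  by move=> mN h; exact: (hequiv th ps N mN).1.
have equiv2 N : measurable N -> P th1 ps N = 0 -> Q N = 0.
  by move=> mN h; exact: (hequiv th1 ps N mN).1.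
have pos1 := fX_pos hX1 equiv1.
have pos2 := fX_pos hX2 equiv2.
have key A B : sigma_path Rr A -> sigma_path X B ->
    P th1 ps (A `&` B) = \int[Q]_(x in A `&` B) (L x)%:E.
  move=> GA GB; have mA := hR _ GA; have mB := hX _ GB.
  pose cp1 := cp hX (P th ps) mA; pose cp2 := cp hX (P th1 ps) mA.
  have ae12 : {ae Q, forall w, cp1 w = cp2 w}.
    exact: (hnoninf th th1 ps A cp1 cp2 GA (cp_version hX (P th ps) mA)
      (cp_version hX (P th1 ps) mA)).
  symmetry.
  transitivity (\int[Q]_(x in A `&` B) (rho x * fF1 x)%:E).
    apply: eq_integral => x _; congr EFin.
    by rewrite /L /rho mulrAC [RHS]mulrAC (mulrC (fF1 x)).
  rewrite -(densF hF1 rho0 (Gmeas_meas hX mrho) (measurableI _ _ mA mB)).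
  rewrite (cp_int hX (P th ps) mA rho0 mrho GB).
  have cp10 x : (0 <= rho x * cp1 x)%R by apply: mulr_ge0 => //; exact: cp_ge0.
  have mcp1 : Gmeas (sigma_path X) (fun x => rho x * cp1 x)%R.
    apply: mf_Gmeas; apply: measurable_funM; first exact: Gmeas_mf.
    exact: (Gmeas_mf (cp_meas hX (P th ps) mA)).
  rewrite (densX hX hX1 cp10 mcp1 GB).
  transitivity (\int[Q]_(x in B) (cp2 x * fX2 x)%:E).
    apply: ge0_ae_eq_integral => //.
    - apply/measurable_funTS/measurable_EFinP; apply: measurable_funM => //.
      exact: (Gmeas_meas hX mcp1).
    - apply/measurable_funTS/measurable_EFinP; apply: measurable_funM => //.
      exact: (Gmeas_meas hX (cp_meas hX (P th1 ps) mA)).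
    - by move=> x _; rewrite lee_fin; apply: mulr_ge0.
    - by move=> x _; rewrite lee_fin; apply: mulr_ge0 => //; exact: cp_ge0.
    apply: aeS (aeI ae12 pos1) => x [e1 p1] _; congr EFin.
    by rewrite /rho e1 mulrAC divfK // mulrC.
  rewrite -(densX hX hX2 (cp_ge0 hX (P th1 ps) mA) (cp_meas hX (P th1 ps) mA) GB).
  by rewrite ((cp_version hX (P th1 ps) mA).2 B GB).
have huniq C : measurable C -> P th1 ps C = dmeas Q mL L0 C.
  apply: (measure_unique Gpi (fun _ => setT) mGpi setIGpi).
  - by move=> _; exists setT, setT; split; [exact: sigma_pathT|split; [exact: sigma_pathT|rewrite setIid]].
  - by apply/seteqP; split => x // _; exists 0%N.
  - by move=> _ [A [B [GA [GB ->]]]]; exact: key.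
  - by move=> _; exact: (le_lt_trans (probability_le1 _ measurableT) (ltry _)).
have hae : ae_eq Q setT (fun x => (fF2 x)%:E) (fun x => (L x)%:E).
  apply: integral_ae_eq => //.
  - apply/integrableP; split; first exact/measurable_EFinP.
    under eq_integral do rewrite gee0_abs ?lee_fin//.
    by rewrite -iF2 // probability_setT ltry.
  - move=> E _ mE; rewrite -iF2 //; exact: huniq.
apply: aeS (aeI hae pos2) => x [h p2].
have := h Logic.I => -[] ->.
by rewrite /L mulfK.
Qed.

End core.
Local Open Scope ring_scope.

Lemma mfU_Gmeas (R : realType) (U : pointedType) (F : (U -> R) -> Prop) (h : U -> R) :
  measurable_fun (setT : set (g_sigma_algebraType (gens F))) (fun x => h x) ->
  Gmeas (gen_of F) h.
Proof. by move=> mh B mB; have := mh measurableT B mB; rewrite setTI. Qed.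

Lemma GmeasU_mf (R : realType) (U : pointedType) (F : (U -> R) -> Prop) (h : U -> R) :
  Gmeas (gen_of F) h ->
  measurable_fun (setT : set (g_sigma_algebraType (gens F))) (fun x => h x).
Proof. by move=> mh _ B mB; rewrite setTI; exact: mh. Qed.

Section main.
Context (R : realType) (n : nat) (d : measure_display) (T : measurableType d)
  (Theta Psi : Type) (th0 : Theta) (ps0 : Psi)
  (P : Theta -> Psi -> probability T R) (X Rr : T -> ppath R n).

Definition FP : (ppath R n * ppath R n -> R) -> Prop :=
  fun f => exists (t : R) (i : 'I_n), 0 <= t /\
            (f = (fun p => p.1 t i) \/ f = (fun p => p.2 t i)).

Definition FO : (T -> R) -> Prop :=
  fun f => exists (t : R) (i : 'I_n), 0 <= t /\
            (f = (fun w => Rr w t i * X w t i) \/ f = (fun w => Rr w t i)).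

Lemma sigma_pairsE : @sigma_pairs R n = gen_of FP.
Proof. by []. Qed.

Lemma sigma_obsE : sigma_obs X Rr = gen_of FO.
Proof. by []. Qed.

Definition prodp (r x : ppath R n) : ppath R n := fun t i => r t i * x t i.
Definition maskp (r x : ppath R n) : ppath R n :=
  fun t i => if (0 <= t) then r t i * x t i else 0.

Lemma cadlag_prodp (r x : ppath R n) : cadlag r -> cadlag x -> cadlag (prodp r x).
Proof.
move=> cr cx i t t0; have [r1 r2] := cr i t t0; have [x1 x2] := cx i t t0.
split.
- exact: (cvgM r1 x1).
- by move=> tpos; apply: is_cvgM; [exact: r2|exact: x2].
Qed.

Lemma FP_psi_meas : forall u, FP u ->
  Gmeas (gen_of FP) (u \o (fun p : ppath R n * ppath R n => (p.1, maskp p.1 p.2))).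
Proof.
move=> u [t [i [t0 [->|->]]]].
- by apply: Gmeas_gen; exists t, i; split => //; left.
- have -> : (fun p : ppath R n * ppath R n => p.2 t i) \o
      (fun p : ppath R n * ppath R n => (p.1, maskp p.1 p.2)) =
      (fun p => p.1 t i * p.2 t i).
    by apply/funext => p /=; rewrite /maskp t0.
  apply: mfU_Gmeas; apply: measurable_funM.
  + apply: GmeasU_mf; apply: Gmeas_gen; exists t, i; split => //; by left.
  + apply: GmeasU_mf; apply: Gmeas_gen; exists t, i; split => //; by right.
Qed.

Hypothesis hset : coarsening_setting th0 ps0 P X Rr.

Lemma gcmp_rel : CAR_GCMP th0 ps0 P X Rr -> CAR_REL th0 ps0 P X Rr.
Proof.
move=> hG ps.
have [[th1 _]|nTh] := pselect (exists th : Theta, True); last first.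
  exists (fun _ _ => 0); split; last split.
  - move=> B mB; have [B0|B0] := pselect (B 0).
    + exists setT; split.
        exact: (@measurableT _ (g_sigma_algebraType (gens FP))).
      by apply/seteqP; split => p [Dp _]; split.
    + exists set0; split.
        exact: (@measurable0 _ (g_sigma_algebraType (gens FP))).
      by apply/seteqP; split => p [Dp hp] //.
  - by move=> th; exfalso; apply: nTh; exists th.
  - by [].
have [g1 [cl1 mg1]] := hG th1 ps.
pose phi w := (Rr w, maskp (Rr w) (X w)).
have hF : forall f, FO f -> exists u, FP u /\ f = u \o phi.
  move=> f [t [i [t0 [->|->]]]].
  - exists (fun p => p.2 t i); split; first by exists t, i; split => //; right.
    by apply/funext => w; rewrite /= /maskp t0.
  - exists (fun p => p.1 t i); split; first by exists t, i; split => //; left.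
    by [].
have [k [mk hk]] := doob_dynkin hF mg1.
exists (fun r x => k (r, maskp r x)); split; last split.
- move=> B mB; exists ((fun p : ppath R n * ppath R n => (p.1, maskp p.1 p.2)) @^-1`
      (k @^-1` B)); split => //.
  exact: (pullback FP_psi_meas (mk B mB)).
- move=> th.
  have -> : (fun w => k (Rr w, maskp (Rr w) (X w))) = g1.
    by apply/funext => w; rewrite hk.
  have [g [clg _]] := hG th ps.
  case: cl1 => mg1' [fF1 [fX1 [hF1 [hX1 ae1]]]].
  case: clg => _ [fF [fX [hFF [hXX ae]]]].
  split => //; exists fF, fX; split => //; split => //.
  have := core hset hFF hXX hF1 hX1.
  move=> c; apply: aeS (aeI c ae1) => w [e1 e2]; by rewrite e2 e1.
- move=> r x x' _ _ _ hrx; congr k; congr pair.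
  apply/funext => t; apply/funext => i; rewrite /maskp.
  by case: ifPn => // t0; rewrite hrx.
Qed.

Lemma rel_gcmp : CAR_REL th0 ps0 P X Rr -> CAR_GCMP th0 ps0 P X Rr.
Proof.
move=> hR th ps.
have [h [htr [hcl hinv]]] := hR ps.
exists (fun w => h (Rr w) (X w)); split; first exact: hcl.
case: hset => hpath _ _ _ _.
move=> B mB.
have [A [GA hA]] := htr B mB.
pose psi w := (Rr w, prodp (Rr w) (X w)).
have Dpsi w : is_Rpath (psi w).1 /\ cadlag (psi w).2.
  have [cx [cr r01]] := hpath w; split; first by split.
  exact: cadlag_prodp.
have hgw w : h (Rr w) (X w) = h (psi w).1 (psi w).2.
  have [cx [cr r01]] := hpath w.
  apply: hinv.
  - by split.
  - exact: cx.
  - exact: cadlag_prodp.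
  move=> t i t0; rewrite /psi /prodp /= mulrA.
  by case: (r01 i t t0) => ->; rewrite ?mul0r ?mul1r.
have -> : (fun w => h (Rr w) (X w)) @^-1` B = psi @^-1` A.
  apply/seteqP; split => w /=.
  - move=> Bw.
    have : ([set p | is_Rpath p.1 /\ cadlag p.2] `&`
        (fun p => h p.1 p.2) @^-1` B) (psi w).
      by split; [exact: Dpsi|rewrite /= -hgw].
    by rewrite hA => -[].
  - move=> Aw.
    have : ([set p | is_Rpath p.1 /\ cadlag p.2] `&` A) (psi w).
      by split; [exact: Dpsi|].
    by rewrite -hA => -[_ /=]; rewrite -hgw.
rewrite sigma_obsE; apply: (pullback _ GA) => u [t [i [t0 [->|->]]]].
- by apply: Gmeas_gen; exists t, i; split => //; right.
- by apply: Gmeas_gen; exists t, i; split => //; left.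
Qed.

End main.

Unset Implicit Arguments.
Theorem theorem1 (R : realType) (n : nat) (d : measure_display) (T : measurableType d)
  (Theta Psi : Type) (th0 : Theta) (ps0 : Psi)
  (P : Theta -> Psi -> probability T R) (X Rr : T -> ppath R n) :
  coarsening_setting th0 ps0 P X Rr ->
  (CAR_GCMP th0 ps0 P X Rr <-> CAR_REL th0 ps0 P X Rr).
Proof.
move=> hset; split; [exact: gcmp_rel|exact: rel_gcmp].
Qed.
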